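(* Let $\Gamma$ be a distance-regular graph with diameter $D\ge3$, valency $k$, and $a_1\ne0$. Let $\sigma_0,\dots,\sigma_D$ be a nontrivial pseudo cosine sequence which is tight, with auxiliary parameter $\varepsilon$, and write $\sigma=\sigma_1$. Then $\sigma\ne1$, $(\sigma^2-\sigma_2)(1-\varepsilon\sigma)\ne0$, and $$k=h\,\frac{\sigma-\varepsilon}{\sigma-1},\qquad\text{where}\quad h=\frac{(1-\sigma)(1-\sigma_2)}{(\sigma^2-\sigma_2)(1-\varepsilon\sigma)}.$$
   Context: $\Gamma$ is a finite connected undirected graph without loops or multiple edges, distance-regular with diameter $D$, intersection numbers $a_i,b_i,c_i$ ($c_0=0$, $b_D=0$), valency $k=b_0$, $c_i+a_i+b_i=k$. For $\theta\in\mathbb{R}$ the pseudo cosine sequence for $\theta$ is the sequence of reals $\sigma_0,\dots,\sigma_D$ with $\sigma_0=1$ and $c_i\sigma_{i-1}+a_i\sigma_i+b_i\sigma_{i+1}=\theta\sigma_i$ for $0\le i\le D-1$; nontrivial means $\sigma_1\ne1$. Pseudo cosine sequences $\sigma_i$, $\rho_i$ form a tight pair if $(\sigma_i\rho_i)_{i=0}^D$ is a pseudo cosine sequence. For a tight pair of nontrivial pseudo cosine sequences, an auxiliary parameter is a real $\varepsilon$ with $\sigma_i\rho_i-\sigma_{i-1}\rho_{i-1}=\varepsilon(\sigma_{i-1}\rho_i-\sigma_i\rho_{i-1})$ for $1\le i\le D$. When $a_1\ne0$, a nontrivial pseudo cosine sequence is tight if some nontrivial pseudo cosine sequence forms a tight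 pair with it; its auxiliary parameter is the (uniquely determined) auxiliary parameter of that pair. *)

(* Defs.v *)
From HB Require Import structures.
From mathcomp Require Import all_boot all_order all_algebra.
Set Implicit Arguments. Unset Strict Implicit. Unset Printing Implicit Defensive.
Import Order.TTheory GRing.Theory Num.Theory.

Section Graph.
Variables (T : finType) (e : rel T).

Definition simple_graph : Prop := symmetric e /\ irreflexive e.

Definition connected_graph : Prop := forall x y : T, connect e x y.

Fixpoint within (n : nat) (x y : T) : bool :=
  if n is n'.+1 then within n' x y || [exists z, within n' x z && e z y]
  else x == y.

(* path-length distance: least n with a walk of length <= n
   (equals #|T| if no such n < #|T|, impossible in a connected graph) *)
Definition dist (x y : T) : nat :=
  find (fun n => within n x y) (iota 0 #|T|).

Definition diameter : nat := \max_(x : T) \max_(y : T) dist x y.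

Definition distance_regular (D : nat) (a b c : nat -> nat) : Prop :=
  [/\ simple_graph /\ connected_graph, diameter = D, c 0 = 0%N, b D = 0%N &
   forall (i : nat) (x y : T), (i <= D)%N -> dist x y = i ->
     [/\ ((0 < i)%N -> #|[set z | e y z & dist x z == i.-1]| = c i),
         #|[set z | e y z & dist x z == i]| = a i &
         #|[set z | e y z & dist x z == i.+1]| = b i]].
End Graph.

Local Open Scope ring_scope.

Section Pseudo.
Variables (R : realFieldType) (D : nat) (a b c : nat -> nat).

(* pseudo cosine sequence for theta: sigma_0 = 1 and
   c_i sigma_{i-1} + a_i sigma_i + b_i sigma_{i+1} = theta sigma_i, 0<=i<=D-1.
   (For i = 0 the term c_0 sigma_{-1} vanishes since c_0 = 0.) *)
Definition pseudo_cosine_for (theta : R) (s : nat -> R) : Prop :=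
  s 0%N = 1 /\
  forall i : nat, (i < D)%N ->
    (c i)%:R * s i.-1 + (a i)%:R * s i + (b i)%:R * s i.+1 = theta * s i.

Definition pseudo_cosine (s : nat -> R) : Prop :=
  exists theta : R, pseudo_cosine_for theta s.

Definition nontrivial_pcs (s : nat -> R) : Prop :=
  pseudo_cosine s /\ s 1%N <> 1.

Definition tight_pair (s r : nat -> R) : Prop :=
  pseudo_cosine s /\ pseudo_cosine r /\ pseudo_cosine (fun i => s i * r i).

Definition auxiliary_parameter (s r : nat -> R) (eps : R) : Prop :=
  forall i : nat, (1 <= i <= D)%N ->
    s i * r i - s i.-1 * r i.-1 = eps * (s i.-1 * r i - s i * r i.-1).

Definition tight_with_aux (s : nat -> R) (eps : R) : Prop :=
  nontrivial_pcs s /\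
  exists r : nat -> R,
    [/\ nontrivial_pcs r, tight_pair s r & auxiliary_parameter s r eps].
End Pseudo.

(* Main.v *)
Require Import Defs.
From HB Require Import structures.
From mathcomp Require Import all_boot all_order all_algebra.
From mathcomp Require Import zify ring lra.
Import Order.TTheory GRing.Theory Num.Theory.
Set Implicit Arguments. Unset Strict Implicit.
Local Open Scope ring_scope.
Lemma sub0 (R : realFieldType) (u v : R) : u = v -> u - v = 0.
Proof. by move=> ->; rewrite subrr. Qed.

Lemma alg (R : realFieldType) (k a1 b1 c2 a2 b2 x s2 s3 y r2 r3 e : R) :
 0 < a1 -> 0 < b1 -> 0 < a2 -> 0 <= b2 -> 0 <= c2 ->
 k = 1 + a1 + b1 -> k = c2 + a2 + b2 ->
 x <> 1 -> y <> 1 ->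
 1 + a1 * x + b1 * s2 = k * x * x ->
 c2 * x + a2 * s2 + b2 * s3 = k * x * s2 ->
 1 + a1 * y + b1 * r2 = k * y * y ->
 c2 * y + a2 * r2 + b2 * r3 = k * y * r2 ->
 1 + a1 * (x * y) + b1 * (s2 * r2) = k * (x * y) * (x * y) ->
 c2 * (x * y) + a2 * (s2 * r2) + b2 * (s3 * r3) = k * (x * y) * (s2 * r2) ->
 x * y - 1 = e * (y - x) ->
 s3 * r3 - s2 * r2 = e * (s2 * r3 - s3 * r2) ->
 [/\ x ^+ 2 - s2 <> 0, 1 - e * x <> 0 &
     k * (x ^+ 2 - s2) * (1 - e * x) = (1 - s2) * (e - x)].
Proof.
move=> a1p b1p a2p b2p c2p hk hk2 x1 y1 es1 es2 er1 er2 ep1 ep2 ea1 ea3.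
have b10 : b1 != 0 by rewrite gt_eqF.
have ES : b1 * (x - s2) = (1 - x) * (k * x + 1).
  apply/eqP; rewrite -subr_eq0; apply/eqP.
  have -> : b1 * (x - s2) - (1 - x) * (k * x + 1) = - (1 + a1 * x + b1 * s2 - k * x * x) + (1 + a1 + b1 - k) * x by ring.
  by rewrite sub0 // sub0 // oppr0 mul0r addr0.
have ER : b1 * (y - r2) = (1 - y) * (k * y + 1).
  apply/eqP; rewrite -subr_eq0; apply/eqP.
  have -> : b1 * (y - r2) - (1 - y) * (k * y + 1) = - (1 + a1 * y + b1 * r2 - k * y * y) + (1 + a1 + b1 - k) * y by ring.
  by rewrite sub0 // sub0 // oppr0 mul0r addr0.
have EP : b1 * (x * y - s2 * r2) = (1 - x * y) * (k * (x * y) + 1).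
  apply/eqP; rewrite -subr_eq0; apply/eqP.
  have -> : b1 * (x * y - s2 * r2) - (1 - x * y) * (k * (x * y) + 1) = - (1 + a1 * (x * y) + b1 * (s2 * r2) - k * (x * y) * (x * y)) + (1 + a1 + b1 - k) * (x * y) by ring.
  by rewrite sub0 // sub0 // oppr0 mul0r addr0.
have K : b1 * (k * x * y - 1) = (k * x + 1) * (k * y + 1).
  have : (1 - x) * (1 - y) * (b1 * (k * x * y - 1) - (k * x + 1) * (k * y + 1)) = 0.
    have -> : (1 - x) * (1 - y) * (b1 * (k * x * y - 1) - (k * x + 1) * (k * y + 1)) =
      b1 * (b1 * (x * y - s2 * r2) - (1 - x * y) * (k * (x * y) + 1)) - (b1 * x - (1 - x) * (k * x + 1)) * (b1 * (y - r2) - (1 - y) * (k * y + 1))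
      - (b1 * (x - s2) - (1 - x) * (k * x + 1)) * (b1 * y - (1 - y) * (k * y + 1)) + (b1 * (x - s2) - (1 - x) * (k * x + 1)) * (b1 * (y - r2) - (1 - y) * (k * y + 1))
      by ring.
    by rewrite (sub0 EP) (sub0 ER) (sub0 ES) !(mulr0, mul0r, subr0, addr0).
  move/eqP; rewrite !mulf_eq0 !subr_eq0 => /orP[/orP[|]|/eqP //].
    by move/eqP => h; case: x1.
  by move/eqP => h; case: y1.
have kgt1 : 1 < k by rewrite hk; lra.
have x1' : x - 1 != 0 by rewrite subr_eq0; apply/eqP.
have y1' : y - 1 != 0 by rewrite subr_eq0; apply/eqP.
have [kx0|kx0] := eqVneq (k * x + 1) 0.
  have s2x : s2 = x.
    move: ES; rewrite kx0 mulr0 => /eqP; rewrite mulf_eq0 (negbTE b10) /= subr_eq0.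
    by move/eqP.
  have xn0 : x != 0 by apply/eqP => x0; move: kx0; rewrite x0 mulr0 add0r; apply/eqP; exact: oner_neq0.
  have ym1 : y = -1.
    move: K; rewrite kx0 mul0r => /eqP; rewrite mulf_eq0 (negbTE b10) /= subr_eq0 => /eqP h.
    apply/eqP; rewrite -subr_eq0 opprK; apply/eqP.
    have -> : y + 1 = (k * x + 1) * y - (k * x * y - 1) by ring.
    by rewrite kx0 h mul0r subrr subr0.
  have xm1 : x + 1 != 0.
    apply/eqP => hx; have : k * x + 1 = 0 by [].
    have -> : x = -1 by apply/eqP; rewrite -subr_eq0 opprK hx.
    move=> /eqP; rewrite mulrN1 addrC subr_eq0 => /eqP k1; lra.
  have e1 : e = 1.
    have : (x + 1) * (1 - e) = 0.
      have -> : (x + 1) * (1 - e) = - (x * y - 1 - e * (y - x)) by rewrite ym1; ring.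
      by rewrite (sub0 ea1) oppr0.
    move/eqP; rewrite mulf_eq0 (negbTE xm1) /= subr_eq0 => /eqP/esym //.
  subst s2 e; split.
  - have -> : x ^+ 2 - x = x * (x - 1) by ring.
    by apply/eqP; rewrite mulf_neq0.
  - rewrite mul1r => /eqP; rewrite subr_eq0 => /eqP/esym; exact: x1.
  - have -> : k * (x ^+ 2 - x) * (1 - 1 * x) = (k * x + 1) * (x - 1) * (1 - x) - (x - 1) * (1 - x) by ring.
    rewrite kx0; ring.
have Q : k * y * (s2 - x ^+ 2) = 1 - s2.
  apply/eqP; rewrite -subr_eq0; apply/eqP.
  have : b1 * (k * x + 1) * (k * y * (s2 - x ^+ 2) - (1 - s2)) = 0.
    have -> : b1 * (k * x + 1) * (k * y * (s2 - x ^+ 2) - (1 - s2)) =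
      (1 - x) * (k * x + 1) * (b1 * (k * x * y - 1) - (k * x + 1) * (k * y + 1))
      - (k * x + 1) * (k * y + 1) * (b1 * (x - s2) - (1 - x) * (k * x + 1)) by ring.
    by rewrite (sub0 K) (sub0 ES) !(mulr0, subr0).
  by move/eqP; rewrite !mulf_eq0 (negbTE b10) (negbTE kx0) /= => /eqP.
split.
- move=> h.
  have s21 : s2 = 1.
    move: Q; rewrite -opprB h oppr0 mulr0 => /esym/eqP; rewrite subr_eq0 => /eqP/esym //.
  have xm1 : x = -1.
    have : (x - 1) * (x + 1) = 0 by rewrite -h s21; ring.
    move/eqP; rewrite mulf_eq0 (negbTE x1') /= addr_eq0 => /eqP //.
  move: ES; rewrite s21 xm1 hk => ES'.
  lra.
- move=> h.
  have yxe : y * (x - e) = 0.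
    have -> : y * (x - e) = (x * y - 1 - e * (y - x)) + (1 - e * x) by ring.
    by rewrite (sub0 ea1) h addr0.
  move/eqP: yxe; rewrite mulf_eq0 => /orP[/eqP y0|].
    subst y.
    have s21 : s2 = 1.
      move: Q; rewrite mulr0 mul0r => /esym/eqP; rewrite subr_eq0 => /eqP/esym //.
    subst s2.
    have r2n : r2 != 0.
      apply/eqP => r20; move: er1; rewrite r20; lra.
    have hb : b2 * r3 = - (a2 * r2).
      move: er2; rewrite !(mulr0, mul0r); lra.
    have hb0 : b2 * r3 != 0 by rewrite hb oppr_eq0 mulf_neq0 // gt_eqF.
    have : b2 * r3 * (s3 - 1) = 0.
      have -> : b2 * r3 * (s3 - 1) = (c2 * (x * 0) + a2 * (1 * r2) + b2 * (s3 * r3) - k * (x * 0) * (1 * r2))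
           - (c2 * 0 + a2 * r2 + b2 * r3 - k * 0 * r2) by ring.
      by rewrite (sub0 ep2) (sub0 er2) subrr.
    move/eqP; rewrite mulf_eq0 (negbTE hb0) /= subr_eq0 => /eqP s31.
    subst s3.
    have : (a2 + b2) * (1 - x) = 0.
      have -> : (a2 + b2) * (1 - x) = (c2 * x + a2 * 1 + b2 * 1 - k * x * 1) + (k - (c2 + a2 + b2)) * x by ring.
      by rewrite (sub0 es2) -hk2 subrr mul0r addr0.
    move/eqP; rewrite mulf_eq0 => /orP[/eqP|]; first lra.
    by rewrite subr_eq0 => /eqP/esym.
  rewrite subr_eq0 => /eqP xe; subst e.
  have xm1 : x = -1.
    have : (x - 1) * (x + 1) = 0.
      have -> : (x - 1) * (x + 1) = - (1 - x * x) by ring.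
      by rewrite h oppr0.
    move/eqP; rewrite mulf_eq0 (negbTE x1') /= addr_eq0 => /eqP //.
  subst x.
  have ky : k * y + 1 = 0.
    have : (k * y + 1) * (1 + b1 - k) = 0.
      have -> : (k * y + 1) * (1 + b1 - k) = - (b1 * (k * -1 * y - 1) - (k * -1 + 1) * (k * y + 1)) by ring.
      by rewrite (sub0 K) oppr0.
    move/eqP; rewrite mulf_eq0 => /orP[/eqP //|/eqP]; lra.
  have r2y : r2 = y.
    have : b1 * (r2 - y) = 0.
      have -> : b1 * (r2 - y) = (1 + a1 * y + b1 * r2 - k * y * y) - (1 + a1 + b1 - k) * y - (1 - y) * (k * y + 1) by ring.
      by rewrite (sub0 er1) -hk subrr mul0r ky mulr0 !subr0.
    by move/eqP; rewrite mulf_eq0 (negbTE b10) /= subr_eq0 => /eqP.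
  subst r2.
  have : (s3 + s2) * (r3 - y) = 0.
    have -> : (s3 + s2) * (r3 - y) = (s3 * r3 - s2 * y) - (-1 * (s2 * r3 - s3 * y)) by ring.
    by rewrite (sub0 ea3).
  move/eqP; rewrite mulf_eq0 => /orP[|].
    rewrite addr_eq0 => /eqP s3e; subst s3.
    move: es2; rewrite hk2 => es2'; move: ES; rewrite hk => ES'.
    have E1 : s2 * (c2 + 2 * a2) = c2 by lra.
    have E2 : b1 * s2 = 2 * a1 + b1 by lra.
    have E3 : b1 * c2 = (2 * a1 + b1) * (c2 + 2 * a2).
      by rewrite -{1}E1 -E2; ring.
    have p1 : 0 < a1 * a2 by rewrite mulr_gt0.
    have p2 : 0 <= a1 * c2 by rewrite mulr_ge0 // ltW.
    have p3 : 0 <= a2 * b1 by rewrite mulr_ge0 // ltW.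
    lra.
  rewrite subr_eq0 => /eqP r3y; subst r3.
  have : k * y * (1 - y) = 0.
    have -> : k * y * (1 - y) = (c2 * y + a2 * y + b2 * y - k * y * y) - (c2 + a2 + b2 - k) * y by ring.
    by rewrite (sub0 er2) -hk2 subrr mul0r subr0.
  move/eqP; rewrite mulf_eq0 => /orP[/eqP ky0|].
    by move: ky; rewrite ky0 add0r => /eqP; rewrite oner_eq0.
  by rewrite subr_eq0 => /eqP/esym.
apply/eqP; rewrite -subr_eq0; apply/eqP.
have -> : k * (x ^+ 2 - s2) * (1 - e * x) - (1 - s2) * (e - x) =
  - (k * (x ^+ 2 - s2)) * (x * y - 1 - e * (y - x)) - (x - e) * (k * y * (s2 - x ^+ 2) - (1 - s2)) by ring.
by rewrite (sub0 ea1) (sub0 Q) !mulr0 subr0.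
Qed.

Local Close Scope ring_scope.

Section G.
Variables (T : finType) (e : rel T).
Hypotheses (esym : symmetric e) (eirr : irreflexive e) (conn : connected_graph e).

Lemma within_S n x y : within e n x y -> within e n.+1 x y.
Proof. by rewrite /= => ->. Qed.

Lemma within_step n x y z : within e n x y -> e y z -> within e n.+1 x z.
Proof. by move=> h1 h2; rewrite /=; apply/orP; right; apply/existsP; exists y; rewrite h1 h2. Qed.

Lemma within_cons n x z y : e x z -> within e n z y -> within e n.+1 x y.
Proof.
elim: n y => [|n IH] y exz.
  move/eqP=> <-; apply/orP; right; apply/existsP; exists x; by rewrite /= eqxx exz.
move=> hz; rewrite /= in hz; case/orP: hz => [h|/existsP[w /andP[h1 h2]]].
  by apply: within_S; apply: IH.
by apply: within_step h2; apply: IH.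
Qed.

Lemma path_within x p : path e x p -> within e (size p) x (last x p).
Proof.
elim: p x => [|z q IH] x /=; first by rewrite eqxx.
by case/andP=> h1 h2; apply: within_cons h1 (IH _ h2).
Qed.

Lemma dist_le n x y : within e n x y -> (dist e x y <= n)%N.
Proof.
move=> h; rewrite /dist; case: (ltnP n #|T|) => hn.
  rewrite leqNgt; apply/negP => hlt.
  by have := before_find 0%N hlt; rewrite nth_iota // add0n h.
by apply: leq_trans (find_size _ _) _; rewrite size_iota.
Qed.

Lemma dist_within x y : (dist e x y < #|T|)%N -> within e (dist e x y) x y.
Proof.
move=> h; have hh : has (fun n => within e n x y) (iota 0 #|T|).
  by rewrite has_find size_iota.
by have := nth_find 0%N hh; rewrite nth_iota ?add0n // -(size_iota 0 #|T|) -has_find.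
Qed.

Lemma dist_lt x y : (dist e x y < #|T|)%N.
Proof.
have /connectP [p pth ->] := conn x y.
case: (shortenP pth) => p' pth' upth _.
apply: (leq_ltn_trans (dist_le (path_within pth'))).
have := max_card (mem (x :: p')); move/card_uniqP: upth => -> /=.
done.
Qed.

Lemma distW x y : within e (dist e x y) x y.
Proof. exact: dist_within (dist_lt x y). Qed.

Lemma dist0 x y : dist e x y = 0%N -> x = y.
Proof. by move=> h; have := distW x y; rewrite h /= => /eqP. Qed.

Lemma dist_xx x : dist e x x = 0%N.
Proof. by apply/eqP; rewrite -leqn0; apply: dist_le; rewrite /= eqxx. Qed.

Lemma dist_edge x y : e x y -> dist e x y = 1%N.
Proof.
move=> h; apply/eqP; rewrite eqn_leq; apply/andP; split.
  by apply: dist_le; apply: (within_step (n:=0)) h; rewrite /= eqxx.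
rewrite lt0n; apply/eqP => /dist0 xy; by rewrite xy eirr in h.
Qed.

Lemma dist_tri x y z : e y z -> (dist e x z <= (dist e x y).+1)%N.
Proof. by move=> h; apply: dist_le; apply: within_step h; apply: distW. Qed.

Lemma dist_tri' x y z : e y z -> (dist e x y <= (dist e x z).+1)%N.
Proof. by move=> h; apply: dist_tri; rewrite esym. Qed.

Lemma dist_desc x w n : dist e x w = n.+1 -> exists y, e y w /\ dist e x y = n.
Proof.
move=> h; have := distW x w; rewrite h /= => /orP[hw|/existsP[y /andP[h1 h2]]].
  by have := dist_le hw; rewrite h ltnn.
exists y; split => //; apply/eqP; rewrite eqn_leq (dist_le h1) /=.
by have := dist_tri x h2; rewrite h ltnS.
Qed.

Lemma dist1_edge x y : dist e x y = 1%N -> e x y.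
Proof. by case/dist_desc=> t [h1 /dist0 ->]. Qed.

Lemma card_split3 (A : {set T}) (f : T -> nat) j :
  (forall z, z \in A -> [|| f z == j, f z == j.+1 | f z == j.+2]) ->
  #|A| = (#|[set z | z \in A & f z == j]| + #|[set z | z \in A & f z == j.+1]|
          + #|[set z | z \in A & f z == j.+2]|)%N.
Proof.
move=> hA.
rewrite -(cardsID [set z | f z == j] A) -(cardsID [set z | f z == j.+1] (A :\: [set z | f z == j])) addnA.
congr (_ + _ + _)%N; apply: eq_card => z; rewrite !inE.
- by [].
- by case: (f z =P j.+1) => [->|]; rewrite ?andbF // (_ : (j.+1 != j) = true) ?andbT // neq_ltn ltnSn orbT.
- case hz: (z \in A); last by rewrite !andbF.
  have := hA z hz; rewrite /=.
  case: (f z =P j) => [->|_] /=.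
    by move=> _; rewrite andbF; symmetry; apply/negbTE/eqP; lia.
  case: (f z =P j.+1) => [->|ne] /=.
    by move=> _; symmetry; apply/negbTE/eqP; lia.
  by move=> ->.
Qed.

Lemma deg_split x y j : dist e x y = j.+1 ->
  #|[set z | e y z]| = (#|[set z | e y z & dist e x z == j]| + #|[set z | e y z & dist e x z == j.+1]|
          + #|[set z | e y z & dist e x z == j.+2]|)%N.
Proof.
move=> h; rewrite (card_split3 (f := dist e x) (j := j)).
  by congr (_ + _ + _)%N; apply: eq_card => z; rewrite !inE.
move=> z; rewrite inE => hz.
have h1 := dist_tri x hz; have h2 := dist_tri' x hz; rewrite h in h1 h2.
have : dist e x z = j \/ dist e x z = j.+1 \/ dist e x z = j.+2 by lia.
by case=> [->|[->|->]]; rewrite eqxx ?orbT.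
Qed.

Lemma deg_eq y : #|[set z | e y z & dist e y z == 1%N]| = #|[set z | e y z]|.
Proof.
apply: eq_card => z; rewrite !inE; case h: (e y z) => //=.
by rewrite (dist_edge h).
Qed.

End G.

Section Desc.
Variables (T : finType) (e : rel T).
Hypotheses (esym : symmetric e) (eirr : irreflexive e) (conn : connected_graph e).

Lemma dist_down x w n m : dist e x w = (n + m)%N -> exists z, dist e x z = n.
Proof.
elim: m w => [|m IH] w; first by rewrite addn0; exists w.
by rewrite addnS => /(dist_desc conn) [y [_ hy]]; apply: (IH y).
Qed.
End Desc.

Unset Implicit Arguments.
Local Open Scope ring_scope.

Theorem lemma13p1 (T : finType) (e : rel T) (D : nat) (a b c : nat -> nat)
  (R : realFieldType) (s : nat -> R) (eps : R) :
  distance_regular e D a b c ->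
  (3 <= D)%N ->
  a 1%N <> 0%N ->
  tight_with_aux D a b c s eps ->
  let sg := s 1%N in
  let h := (1 - sg) * (1 - s 2%N) / ((sg ^+ 2 - s 2%N) * (1 - eps * sg)) in
  [/\ sg <> 1,
      (sg ^+ 2 - s 2%N) * (1 - eps * sg) <> 0 &
      (b 0%N)%:R = h * ((sg - eps) / (sg - 1))].
Proof.
move=> [[[esym eirr] conn] diam c0 bD H] D3 a1n0.
move=> [[pcs sn1] [r [[pcr rn1] [_ [_ pcp]] aux]]] sg h.
have [x [w hxw]] : exists x w, (3 <= dist e x w)%N.
  case: (boolP [exists x, exists w, 3 <= dist e x w]%N).
    by case/existsP=> x /existsP [w hw]; exists x, w.
  rewrite negb_exists => /forallP hn.
  have : (diameter e <= 2)%N.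
    apply/bigmax_leqP => x _; apply/bigmax_leqP => w _.
    by move: (hn x); rewrite negb_exists => /forallP /(_ w); rewrite -ltnNge ltnS.
  by rewrite diam => hD2; lia.
have [z hz] : exists z, dist e x z = 3%N.
  by apply: (dist_down conn (m := (dist e x w - 3)%N)); rewrite subnKC.
have [y [eyz hy]] := dist_desc conn hz.
have [u [euy hu]] := dist_desc conn hy.
have exu : e x u := dist1_edge conn hu.
have [_ Ha0 Hb0x] := H 0%N x x (leq0n _) (dist_xx e x).
have ha0 : a 0%N = 0%N.
  rewrite -Ha0; apply: eq_card0 => t; rewrite !inE.
  by apply/negP => /andP [ext /eqP /(dist0 conn) xt]; move: ext; rewrite -xt eirr.
have [Hc1 Ha1 Hb1] := H 1%N x u (leq_trans (isT : (1 <= 3)%N) D3) hu.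
have hc1 : c 1%N = 1%N.
  rewrite -Hc1 // (_ : [set z | _] = [set x]) ?cards1 //; apply/setP => t; rewrite !inE.
  case: (t =P x) => [->|ntx]; first by rewrite esym exu dist_xx.
  by rewrite andbC; case: (dist e x t =P 0%N) => // /(dist0 conn) xt; case: ntx.
have hb1 : (0 < b 1%N)%N.
  by rewrite -Hb1; apply/card_gt0P; exists y; rewrite inE euy hy.
have [_ _ Hbu] := H 0%N u u (leq0n _) (dist_xx e u).
have hk1 : b 0%N = (c 1%N + a 1%N + b 1%N)%N.
  by rewrite -Hbu (deg_eq eirr conn) (deg_split esym conn hu) Hc1 // Ha1 Hb1.
have [Hc2 Ha2 Hb2] := H 2%N x y (leq_trans (isT : (2 <= 3)%N) D3) hy.
have [_ _ Hby] := H 0%N y y (leq0n _) (dist_xx e y).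
have hk2 : b 0%N = (c 2%N + a 2%N + b 2%N)%N.
  by rewrite -Hby (deg_eq eirr conn) (deg_split esym conn hy) Hc2 // Ha2 Hb2.
have ha2 : (0 < a 2%N)%N.
  rewrite lt0n; apply/eqP => a20.
  have duz : dist e u z = 2%N.
    have le2 : (dist e u z <= 2)%N.
      apply: dist_le; apply: within_step eyz; apply: within_step euy.
      by rewrite /= eqxx.
    have ne0 : dist e u z <> 0%N.
      by move/(dist0 conn) => uz; move: hz; rewrite -uz hu.
    have ne1 : dist e u z <> 1%N.
      move/(dist1_edge conn) => euz.
      by have := dist_tri conn x euz; rewrite hz hu.
    lia.
  have [_ Ha1y _] := H 1%N y z (leq_trans (isT : (1 <= 3)%N) D3) (dist_edge eirr conn eyz).
  have : (0 < #|[set t | e z t & dist e y t == 1%N]|)%N by rewrite Ha1y lt0n; apply/eqP.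
  case/card_gt0P => t; rewrite inE => /andP [ezt /eqP dyt].
  have eyt := dist1_edge conn dyt.
  have [_ Ha2u _] := H 2%N u z (leq_trans (isT : (2 <= 3)%N) D3) duz.
  have dut : (dist e u t <= 2)%N.
    apply: dist_le; apply: within_step eyt; apply: within_step euy.
    by rewrite /= eqxx.
  have dut2 : dist e u t <> 2%N.
    move=> hut; have : (0 < #|[set t | e z t & dist e u t == 2%N]|)%N.
      by apply/card_gt0P; exists t; rewrite inE ezt hut.
    by rewrite Ha2u a20.
  have dut0 : dist e u t <> 0%N.
    move/(dist0 conn) => ut; have := dist_tri conn x ezt.
    by rewrite esym in ezt; have := dist_tri conn x ezt; rewrite -ut hu hz.
  have eut : e u t by apply: (dist1_edge conn); lia.
  have dxt : dist e x t = 2%N.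
    have := dist_tri conn x eut; have := dist_tri' esym conn x ezt.
    rewrite hu hz; lia.
  have : (0 < #|[set t' | e y t' & dist e x t' == 2%N]|)%N.
    by apply/card_gt0P; exists t; rewrite inE eyt dxt.
  by rewrite Ha2 a20.
case: pcs => th [s0 Es]; case: pcr => th' [r0 Er]; case: pcp => th'' [p0 Ep].
have D0 : (0 < D)%N by apply: leq_trans D3.
have D1 : (1 < D)%N by apply: leq_trans D3.
have D2 : (2 < D)%N by [].
have Es0 := Es 0%N D0; have Es1 := Es 1%N D1; have Es2 := Es 2%N D2.
have Er0 := Er 0%N D0; have Er1 := Er 1%N D1; have Er2 := Er 2%N D2.
have Ep0 := Ep 0%N D0; have Ep1 := Ep 1%N D1; have Ep2 := Ep 2%N D2.
have A1 := aux 1%N (ltnW D1).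
have A3 := aux 3%N D3.
rewrite /= in Es0 Es1 Es2 Er0 Er1 Er2 Ep0 Ep1 Ep2 A1 A3.
rewrite ?c0 ?ha0 ?hc1 ?s0 ?r0 ?(mul0r, add0r, mulr1, mul1r) in Es0 Er0 Ep0 A1.
rewrite -Es0 ?hc1 ?s0 ?mul1r in Es1 Es2.
rewrite -Er0 ?hc1 ?r0 ?mul1r in Er1 Er2.
rewrite -Ep0 ?hc1 ?s0 ?r0 ?mul1r in Ep1 Ep2.
have := @alg R (b 0%N)%:R (a 1%N)%:R (b 1%N)%:R (c 2%N)%:R (a 2%N)%:R (b 2%N)%:R
  (s 1%N) (s 2%N) (s 3%N) (r 1%N) (r 2%N) (r 3%N) eps.
have pa1 : 0 < (a 1%N)%:R :> R by rewrite ltr0n lt0n; apply/eqP.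
have pb1 : 0 < (b 1%N)%:R :> R by rewrite ltr0n.
have pa2 : 0 < (a 2%N)%:R :> R by rewrite ltr0n.
have hkR : (b 0%N)%:R = 1 + (a 1%N)%:R + (b 1%N)%:R :> R by rewrite hk1 hc1 !natrD.
have hk2R : (b 0%N)%:R = (c 2%N)%:R + (a 2%N)%:R + (b 2%N)%:R :> R by rewrite hk2 !natrD.
case/(_ pa1 pb1 pa2 (ler0n _ _) (ler0n _ _) hkR hk2R sn1 rn1 Es1 Es2 Er1 Er2 Ep1 Ep2 A1 A3) => N1 N2 G.
rewrite /h /sg; split => //.
  by apply/eqP; rewrite mulf_neq0 //; apply/eqP.
have x1 : s 1%N - 1 != 0 by rewrite subr_eq0; apply/eqP.
have M0 : (s 1%N ^+ 2 - s 2%N) * (1 - eps * s 1%N) != 0 by rewrite mulf_neq0 //; apply/eqP.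
have -> : (b 0%N)%:R = (1 - s 2%N) * (eps - s 1%N) / ((s 1%N ^+ 2 - s 2%N) * (1 - eps * s 1%N)).
  by rewrite -G -mulrA mulfK.
by field; rewrite x1 /= ?M0 //; apply/andP; split; apply/eqP.
Qed.
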